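(* Let $Y=\{Y_t,\ t\in\mathbb{Z}\}$ be an $\mathbb{N}_0$-valued process satisfying $$Y_t\mid\mathcal{F}_{t-1}\sim p(\cdot;\lambda_t(\theta^* )),\qquad \lambda_t(\theta)=f_\theta(Y_{t-1},Y_{t-2},\dots),\qquad \lambda_t(\theta^* )=\mathbb{E}(Y_t\mid\mathcal{F}_{t-1}),$$ where $\mathcal{F}_{t-1}=\sigma(Y_{t-1},Y_{t-2},\dots)$, $p(\cdot;\lambda)$ is an unknown discrete distribution, and for each $\theta$ in a compact $\Theta\subset\mathbb{R}^d$, $f_\theta$ is a non-negative measurable function on $\mathbb{N}_0^{\mathbb{N}}$. Assume $Y$ is strictly stationary and ergodic, that $\mathbb{E}Y_t^{1+\epsilon}<C$ for all $t$ for some $C>0$, $\epsilon>1$, and that assumptions (A0)–(A7) and (A$_i(\Theta)$) for $i=0,1,2$ (stated in the context) hold. Let $(\kappa_n)$ be an increasing sequence with $\kappa_n<n$, $\kappa_n\to\infty$, $\kappa_n=o(n)$ and $$\sum_{\ell\ge1}\frac{1}{\kappa_\ell}\sum_{k\ge\ell}\alpha^{(i)}_k<\infty\quad\text{for } i=0,1,2.$$ Then $$\frac{1}{\kappa_n}\sup_{\theta\in\Theta}\big|\widehat L_n(\theta)-L_n(\theta)\big|\longrightarrow0\quad\text{almost surely as } n\to\infty.$$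
   Context: Models: a model $m$ is a subset of $\{1,\dots,d\}$, $|m|$ its cardinality, $\Theta(m)=\{\theta\in\Theta:\theta_i=0\ \forall i\notin m\}$; $\mathcal{M}$ is a finite family of models containing the true model $m^*$ with $\theta^*\in\Theta(m^* )$. Define $\ell_t(\theta)=Y_t\log\lambda_t(\theta)-\lambda_t(\theta)$, $L_n(\theta)=\sum_{t=1}^n\ell_t(\theta)$, $\widehat\lambda_t(\theta)=f_\theta(Y_{t-1},\dots,Y_1,0,0,\dots)$, $\widehat L_n(\theta)=\sum_{t=1}^n(Y_t\log\widehat\lambda_t(\theta)-\widehat\lambda_t(\theta))$. Assumptions: (A$_i(\Theta)$), $i=0,1,2$: for every $y\in\mathbb{N}_0^{\mathbb{N}}$, $\theta\mapsto f_\theta(y)$ is $i$ times continuously differentiable on $\Theta$ and there is a non-negative sequence $(\alpha^{(i)}_k)_{k\ge1}$ with $\sum_k\alpha^{(0)}_k<1$ (for $i=0$), resp. $\sum_k\alpha^{(i)}_k<\infty$ (for $i=1,2$), such that $\sup_{\theta\in\Theta}\|\partial^if_\theta(y)/\partial\theta^i-\partial^if_\theta(y')/\partial\theta^i\|\le\sum_{k\ge1}\alpha^{(i)}_k|y_k-y'_k|$ for all $y,y'$. (A0) if $f_\theta(Y_{t-1},\dots)=f_{\theta'}(Y_{t-1},\dots)$ a.s. for some $t$ then $\theta=\theta'$; and $\inf_{\theta\in\Theta}f_\theta(y)\ge\underline{c}>0$ for all $y$. (A1) $\theta^*$ is an interior point of $\Theta(m^* )$. (A2) $\theta\mapsto f_\theta(y)$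 is twice continuously differentiable on $\Theta$ for every $y$. (A3) $a_t\to0$ and $Y_ta_t\to0$ as $t\to\infty$, with $a_t=\sup_{\theta\in\Theta}|\widehat\lambda_t(\theta)-\lambda_t(\theta)|$. (A4) $J(\theta^* )=\mathbb{E}\big[\lambda_t(\theta^* )^{-1}\frac{\partial\lambda_t(\theta^* )}{\partial\theta}\frac{\partial\lambda_t(\theta^* )}{\partial\theta'}\big]<\infty$ and $I(\theta^* )=\mathbb{E}\big[\frac{\mathrm{Var}(Y_t\mid\mathcal{F}_{t-1})}{\lambda_t(\theta^* )^2}\frac{\partial\lambda_t(\theta^* )}{\partial\theta}\frac{\partial\lambda_t(\theta^* )}{\partial\theta'}\big]<\infty$. (A5) for $c\in\mathbb{R}^d$, $c'\frac{\partial\lambda_t(\theta^* )}{\partial\theta}=0$ a.s. implies $c=0$. (A6) there is a neighbourhood $V(\theta^* )$ of $\theta^*$ with $\mathbb{E}\big[\sup_{\theta\in V(\theta^* )}|\partial^2\ell_t(\theta)/\partial\theta_i\partial\theta_j|\big]<\infty$ for all $i,j$. (A7) $b_t$, $b_tY_t$ and $a_td_tY_t$ are $O(t^{-h})$ for some $h>1/2$, where $b_t=\sup_{\theta\in\Theta}\mathbb{E}\big\|\frac{\partial\widehat\lambda_t(\theta)}{\partial\theta}-\frac{\partial\lambda_t(\theta)}{\partial\theta}\big\|$ and $d_t=\sup_{\theta\in\Theta}\max\big\{\mathbb{E}\big\|\widehat\lambda_t(\theta)^{-1}\frac{\partial\widehat\lambda_t(\theta)}{\partial\theta}\big\|,\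 \mathbb{E}\big\|\lambda_t(\theta)^{-1}\frac{\partial\lambda_t(\theta)}{\partial\theta}\big\|\big\}$. *)

(* Defs.v *)
From HB Require Import structures.
From mathcomp Require Import all_boot all_order all_algebra.
From mathcomp Require Import all_classical all_reals all_analysis.
Set Implicit Arguments. Unset Strict Implicit. Unset Printing Implicit Defensive.
Import Order.TTheory GRing.Theory Num.Theory.
Import numFieldNormedType.Exports.
Local Open Scope classical_set_scope.
Local Open Scope ring_scope.

Section Defs.
Variable R : realType.
Variable d : nat.

(* Sequences y in N_0^N are encoded as y : nat -> nat with y k = y_{k+1};
   similarly alpha k = alpha_{k+1}. *)

Definition ej (j : 'I_d) : 'rV[R]_d := delta_mx 0 j.

Definition pd (j : 'I_d) (g : 'rV[R]_d -> R) (th : 'rV[R]_d) : R :=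
  derive g th (ej j).

Definition grad (g : 'rV[R]_d -> R) (th : 'rV[R]_d) : 'rV[R]_d :=
  \row_j pd j g th.

Definition hess (g : 'rV[R]_d -> R) (th : 'rV[R]_d) : 'M[R]_d :=
  \matrix_(i, j) pd i (pd j g) th.

Definition C0_on (Th : set 'rV[R]_d) (g : 'rV[R]_d -> R) : Prop :=
  {within Th, continuous g}.

Definition C1_on (Th : set 'rV[R]_d) (g : 'rV[R]_d -> R) : Prop :=
  exists U : set 'rV[R]_d, [/\ open U, Th `<=` U &
    forall th, U th -> forall j : 'I_d,
      derivable g th (ej j) /\ {for th, continuous (pd j g)}].

Definition C2_on (Th : set 'rV[R]_d) (g : 'rV[R]_d -> R) : Prop :=
  exists U : set 'rV[R]_d, [/\ open U, Th `<=` U &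
    forall th, U th -> forall i j : 'I_d,
      [/\ derivable g th (ej j), derivable (pd j g) th (ej i),
          {for th, continuous (pd j g)} &
          {for th, continuous (pd i (pd j g))}]].

Definition Theta_m (Th : set 'rV[R]_d) (m : {set 'I_d}) : set 'rV[R]_d :=
  [set th | Th th /\ forall i : 'I_d, i \notin m -> th 0 i = 0].

(** theta is an interior point of Theta(m), interior taken relative to the
    coordinate subspace R^m = { theta : theta_i = 0 for i notin m } *)
Definition interior_model (Th : set 'rV[R]_d) (m : {set 'I_d})
    (th0 : 'rV[R]_d) : Prop :=
  Theta_m Th m th0 /\
  exists e : R, 0 < e /\ forall th : 'rV[R]_d,
    (forall i : 'I_d, i \notin m -> th 0 i = 0) ->
    `|th - th0| < e -> Theta_m Th m th.

Definition A0_Theta (Th : set 'rV[R]_d) (f : 'rV[R]_d -> (nat -> nat) -> R)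
    (al : nat -> R) : Prop :=
  (forall y, C0_on Th (fun th => f th y)) /\
  (forall k, 0 <= al k) /\
  (\sum_(0 <= k <oo) (al k)%:E < 1)%E /\
  forall (y y' : nat -> nat) th, Th th ->
    ((`|f th y - f th y'|)%:E <=
      \sum_(0 <= k <oo) (al k * `|(y k)%:R - (y' k)%:R|)%:E)%E.

Definition A1_Theta (Th : set 'rV[R]_d) (f : 'rV[R]_d -> (nat -> nat) -> R)
    (al : nat -> R) : Prop :=
  (forall y, C1_on Th (fun th => f th y)) /\
  (forall k, 0 <= al k) /\
  (\sum_(0 <= k <oo) (al k)%:E < +oo)%E /\
  forall (y y' : nat -> nat) th, Th th ->
    ((`|grad (fun t => f t y) th - grad (fun t => f t y') th|)%:E <=
      \sum_(0 <= k <oo) (al k * `|(y k)%:R - (y' k)%:R|)%:E)%E.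

Definition A2_Theta (Th : set 'rV[R]_d) (f : 'rV[R]_d -> (nat -> nat) -> R)
    (al : nat -> R) : Prop :=
  (forall y, C2_on Th (fun th => f th y)) /\
  (forall k, 0 <= al k) /\
  (\sum_(0 <= k <oo) (al k)%:E < +oo)%E /\
  forall (y y' : nat -> nat) th, Th th ->
    ((`|hess (fun t => f t y) th - hess (fun t => f t y') th|)%:E <=
      \sum_(0 <= k <oo) (al k * `|(y k)%:R - (y' k)%:R|)%:E)%E.

End Defs.

Section Process.
Context {R : realType} {d0 : measure_display} {Omega : measurableType d0}.
Variable d : nat.

Definition lam (f : 'rV[R]_d -> (nat -> nat) -> R) (Y : int -> Omega -> nat)
    (th : 'rV[R]_d) (t : int) (w : Omega) : R :=
  f th (fun k => Y (t - (k.+1)%:Z)%R w).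

Definition lamhat (f : 'rV[R]_d -> (nat -> nat) -> R) (Y : int -> Omega -> nat)
    (th : 'rV[R]_d) (t : nat) (w : Omega) : R :=
  f th (fun k => if (k.+1 < t)%N then Y (t%:Z - (k.+1)%:Z)%R w else 0%N).

Definition ell f Y th (t : int) w : R :=
  (Y t w)%:R * ln (lam f Y th t w) - lam f Y th t w.

Definition Ln f Y th (n : nat) w : R :=
  \sum_(1 <= t < n.+1) ell f Y th t%:Z w.

Definition Lnhat f Y th (n : nat) w : R :=
  \sum_(1 <= t < n.+1)
     ((Y t%:Z w)%:R * ln (lamhat f Y th t w) - lamhat f Y th t w).

Definition Fpast (Y : int -> Omega -> nat) (t : int) : set (set Omega) :=
  smallest (sigma_algebra setT)
    [set A | exists (s : int) (k : nat), (s < t)%R /\ A = [set w | Y s w = k]].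

Definition cyl_measurable_Z (B : set (int -> nat)) : Prop :=
  smallest (sigma_algebra setT)
    [set A | exists (s : int) (k : nat), A = [set y | y s = k]] B.

Definition cyl_measurable_N (B : set (nat -> nat)) : Prop :=
  smallest (sigma_algebra setT)
    [set A | exists (s : nat) (k : nat), A = [set y | y s = k]] B.

(** strict stationarity: all finite-dimensional distributions are
    shift-invariant (Y is N_0-valued, so cylinder point probabilities
    determine them) *)
Definition strictly_stationary (P : probability Omega R)
    (Y : int -> Omega -> nat) : Prop :=
  forall (s : seq (int * nat)) (h : int),
    P [set w | all (fun tk => Y tk.1 w == tk.2) s] =
    P [set w | all (fun tk => Y (tk.1 + h)%R w == tk.2) s].

Definition ergodic (P : probability Omega R) (Y : int -> Omega -> nat) : Prop :=
  forall B : set (int -> nat), cyl_measurable_Z B ->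
    (forall y, B y <-> B (fun t => y (t + 1)%R)) ->
    P [set w | B (fun t => Y t w)] = 0%E \/
    P [set w | B (fun t => Y t w)] = 1%E.

Definition a_t f Y (Th : set 'rV[R]_d) (t : nat) (w : Omega) : \bar R :=
  ereal_sup [set (`|lamhat f Y th t w - lam f Y th t%:Z w|)%:E | th in Th].

Definition b_t (P : probability Omega R) f Y (Th : set 'rV[R]_d) (t : nat)
    : \bar R :=
  ereal_sup [set (\int[P]_w
      (`|grad (fun u => lamhat f Y u t w) th
         - grad (fun u => lam f Y u t%:Z w) th|)%:E)%E | th in Th].

Definition d_t (P : probability Omega R) f Y (Th : set 'rV[R]_d) (t : nat)
    : \bar R :=
  ereal_sup [set maxe
      (\int[P]_w (`|(lamhat f Y th t w)^-1 *: grad (fun u => lamhat f Y u t w) th|)%:E)%E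
      (\int[P]_w (`|(lam f Y th t%:Z w)^-1 *: grad (fun u => lam f Y u t%:Z w) th|)%:E)%E
    | th in Th].

Definition condvar (p : R -> nat -> R) (l : R) : \bar R :=
  (\sum_(0 <= k <oo) (((k%:R - l) ^+ 2) * p l k)%:E)%E.

Definition bigO_pow (u : nat -> \bar R) (h : R) : Prop :=
  exists K : R, \forall t \near \oo,
    (`|u t| <= (K * (t%:R `^ (- h)))%:E)%E.

End Process.

(* Main.v *)
Require Import Defs.
From HB Require Import structures.
From mathcomp Require Import all_boot all_order all_algebra.
From mathcomp Require Import all_classical all_reals all_analysis.
From mathcomp Require Import measurable_realfun.
From mathcomp Require Import ring lra.
Import Order.TTheory GRing.Theory Num.Theory.
Import numFieldNormedType.Exports.
Local Open Scope classical_set_scope.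
Local Open Scope ring_scope.
Lemma ln_lip (R : realType) (c a b : R) : 0 < c -> c <= a -> c <= b ->
  `|ln a - ln b| <= `|a - b| / c.
Proof.
wlog ba : a b / b <= a.
  move=> H c0 ca cb; have [ba|ab] := leP b a; first exact: H.
  by rewrite distrC [`|a - b|]distrC; apply: H => //; exact: ltW.
move=> c0 ca cb.
have a0 : 0 < a by apply: lt_le_trans ca.
have b0 : 0 < b by apply: lt_le_trans cb.
have lnab : ln b <= ln a by rewrite ler_ln ?posrE.
rewrite ger0_norm ?subr_ge0 // ger0_norm ?subr_ge0 //.
have e : ln a - ln b = ln (a / b) by rewrite lnM ?posrE ?invr_gt0 // lnV ?posrE.
have := expR_ge1Dx (ln (a / b)); rewrite lnK ?posrE ?divr_gt0 // -e => h.
have h2 : ln a - ln b <= (a - b) / b.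
  by rewrite mulrBl divff ?gt_eqF //; lra.
apply: (le_trans h2); apply: ler_wpM2l; first by rewrite subr_ge0.
by rewrite lef_pV2 ?posrE.
Qed.
Lemma kron (R : realType) (kappa : nat -> R) (x : nat -> \bar R) :
  (forall n, (0 < n)%N -> 0 < kappa n) ->
  (forall n m, (0 < n)%N -> (n <= m)%N -> kappa n <= kappa m) ->
  kappa @ \oo --> +oo ->
  (forall t, 0 <= x t)%E ->
  (\sum_(0 <= l <oo) ((kappa l.+1)^-1)%:E * x l.+1 < +oo)%E ->
  (fun n => ((kappa n)^-1)%:E * \sum_(1 <= t < n.+1) x t)%E @ \oo --> 0%E.
Proof.
move=> kpos kmono kinf x0 Hs.
set y := fun l => (((kappa l.+1)^-1)%:E * x l.+1)%E.
have y0 : forall l, (0 <= y l)%E.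
  by move=> l; rewrite /y mule_ge0 // lee_fin invr_ge0 ltW // kpos.
have xy : forall l, x l.+1 = ((kappa l.+1)%:E * y l)%E.
  by move=> l; rewrite /y muleA -EFinM divff ?mul1e // gt_eqF // kpos.
have yfin : forall l, y l \is a fin_num.
  move=> l; rewrite ge0_fin_numE //; apply: le_lt_trans Hs.
  rewrite -/y; apply: le_trans (nneseries_lim_ge (m := 0%N) l.+1 _).
    rewrite big_nat_recr //=; apply: leeDr; apply: sume_ge0 => i _; exact: y0.
  by move=> n _ _; exact: y0.
have xfin : forall t, (0 < t)%N -> x t \is a fin_num.
  by case=> // t _; rewrite xy fin_numM.
have tail := nneseries_tail_cvg Hs (fun k _ => y0 k).
apply/fine_cvgP; split.
  near=> n; rewrite fin_numM //; apply/sum_fin_numP => t; rewrite mem_index_iota => /andP[t1 _] _.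
  exact: xfin.
apply/cvgrPdist_le => e e0.
have e2 : 0 < e / 2 by rewrite divr_gt0.
have /fine_cvgP[tfin /cvgrPdist_le /(_ (e / 2) e2) tl] := tail.
have [N1 _ HN1] := tfin.
have [N2 _ HN2] := tl.
set N0 := maxn 1 (maxn N1 N2).
set TN := (\sum_(N0 <= k <oo) y k)%E.
have TN0 : (0 <= TN)%E by apply: nneseries_ge0 => k _ _; exact: y0.
have TNfin : TN \is a fin_num.
  by apply: (HN1 N0); rewrite /= /N0 leq_max (leq_max N1) leqnn orbT.
have TNe : (TN <= (e / 2)%:E)%E.
  have := HN2 N0; rewrite /= /N0 leq_max (leq_max N2) leqnn !orbT => /(_ isT).
  rewrite -/y -/TN sub0r normrN ger0_norm ?fine_ge0 // => h.
  by rewrite -(fineK TNfin) lee_fin.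
set P0 := (\sum_(1 <= t < N0.+1) x t)%E.
have P00 : (0 <= P0)%E by apply: sume_ge0 => t _; exact: x0.
have P0fin : P0 \is a fin_num.
  apply/sum_fin_numP => t; rewrite mem_index_iota => /andP[t1 _] _; exact: xfin.
near=> n.
have nN0 : (N0 <= n)%N by near: n; exact: nbhs_infty_ge.
have kn : 2 * fine P0 / e <= kappa n by near: n; exact: cvgry_ge.
have n0 : (0 < n)%N by apply: leq_trans nN0; rewrite leq_max leqnn.
have kn0 := kpos n n0.
set h := (((kappa n)^-1)%:E * \sum_(1 <= t < n.+1) x t)%E.
have h0 : (0 <= h)%E.
  apply: mule_ge0; first by rewrite lee_fin invr_ge0 ltW.
  by apply: sume_ge0 => t _; exact: x0.
have hfin : h \is a fin_num.
  apply: fin_numM => //; apply/sum_fin_numP => t; rewrite mem_index_iota => /andP[t1 _] _.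
  exact: xfin.
have hle : (h <= e%:E)%E.
  rewrite /h (big_cat_nat _ (n := N0.+1)) //= -/P0 big_add1 /=.
  have S1 : (\sum_(N0 <= i < n) x i.+1 <= (kappa n)%:E * TN)%E.
    apply: (@le_trans _ _ (\sum_(N0 <= i < n) ((kappa n)%:E * y i))%E).
      rewrite big_nat_cond [X in (_ <= X)%E]big_nat_cond.
      apply: lee_sum => i /andP[/andP[_ ilt] _].
      rewrite xy; apply: lee_wpmul2r => //; rewrite lee_fin; apply: kmono => //.
    rewrite -ge0_sume_distrr; last by move=> i _; exact: y0.
    apply: lee_wpmul2l; first by rewrite lee_fin ltW.
    by apply: nneseries_lim_ge => i _ _; exact: y0.
  apply: (@le_trans _ _ (((kappa n)^-1)%:E * (P0 + (kappa n)%:E * TN))%E).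
    apply: lee_wpmul2l; first by rewrite lee_fin invr_ge0 ltW.
    by apply: leeD.
  have ad : (P0 +? ((kappa n)%:E * TN))%E.
    apply: ge0_adde_def; rewrite inE //; apply: mule_ge0 => //.
    by rewrite lee_fin ltW.
  rewrite muleDr //.
  rewrite muleA -EFinM mulVf ?gt_eqF // mul1e.
  rewrite -(fineK P0fin) -EFinM (splitr e) EFinD; apply: leeD => //; rewrite lee_fin.
  rewrite mulrC ler_pdivrMr //; move: kn; rewrite ler_pdivrMr // => kn; nra.
rewrite /= -/h sub0r normrN ger0_norm ?fine_ge0 //.
by rewrite -lee_fin fineK.
Unshelve. all: end_near.
Qed.
Lemma meas_natfun d (Omega : measurableType d) d' (T : measurableType d')
  (Z : Omega -> nat) (h : nat -> T) :
  (forall k, measurable [set w | Z w = k]) -> measurable_fun setT (h \o Z).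
Proof.
move=> HZ _ B mB; rewrite setTI.
have -> : (h \o Z) @^-1` B = \bigcup_(k in [set k | B (h k)]) [set w | Z w = k].
  apply/seteqP; split => [w /= Bw|w [k /= Bk Zk]]; last by rewrite /= Zk.
  by exists (Z w).
by apply: bigcup_measurable => k _; exact: HZ.
Qed.

Lemma meas_natfun2 d (Omega : measurableType d) d' (T : measurableType d')
  (Z1 Z2 : Omega -> nat) (h : nat -> nat -> T) :
  (forall k, measurable [set w | Z1 w = k]) ->
  (forall k, measurable [set w | Z2 w = k]) ->
  measurable_fun setT (fun w => h (Z1 w) (Z2 w)).
Proof.
move=> HZ1 HZ2 _ B mB; rewrite setTI.
have -> : (fun w => h (Z1 w) (Z2 w)) @^-1` B =
   \bigcup_(k in [set k | True]) \bigcup_(j in [set j | B (h k j)])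
      ([set w | Z1 w = k] `&` [set w | Z2 w = j]).
  apply/seteqP; split => [w /= Bw|w [k _ [j /= Bk [Zk Zj]]]]; last by rewrite /= Zk Zj.
  by exists (Z1 w) => //; exists (Z2 w).
apply: bigcup_measurable => k _; apply: bigcup_measurable => j _.
exact: measurableI.
Qed.
Lemma sq_le_pow (R : realType) (e : R) (n : nat) : 1 < e ->
  (n%:R : R) ^+ 2 <= 1 + n%:R `^ (1 + e).
Proof.
move=> e1; case: n => [|n].
  by rewrite expr2 mul0r; apply: addr_ge0 => //; exact: powR_ge0.
rewrite -powR_mulrn //; apply: (@le_trans _ _ (n.+1%:R `^ (1 + e))); last by rewrite lerDr.
apply: ler_powR; first by rewrite ler1n.
lra.
Qed.

Lemma ptw_bound (R : realType) (c e : R) (n m : nat) : 0 < c -> 1 < e ->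
  (1 + n%:R / c) * m%:R <=
  (1 + c^-1) * (2 + n%:R `^ (1 + e) + m%:R `^ (1 + e)).
Proof.
move=> c0 e1.
have hn := @sq_le_pow R e n e1; have hm := @sq_le_pow R e m e1.
have A0 : 0 <= (n%:R : R) `^ (1 + e) by exact: powR_ge0.
have B0 : 0 <= (m%:R : R) `^ (1 + e) by exact: powR_ge0.
have mm : (m%:R : R) <= m%:R ^+ 2.
  by rewrite expr2 -natrM ler_nat; case: m {hm B0} => // m; rewrite leq_pmulr.
have n0 : (0 : R) <= n%:R by [].
have m0 : (0 : R) <= m%:R by [].
have ic0 : 0 < c^-1 by rewrite invr_gt0.
move: hn hm mm; rewrite !expr2.
set A := _ `^ _; set B := _ `^ _; set N := (n%:R : R); set M := (m%:R : R).
set ic := c^-1 => hn hm mm.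
rewrite /(_ / _) -/ic.
have nm : N * M <= 2 + A + B by nra.
have h2 := ler_wpM2l (ltW ic0) nm.
have h3 : M <= 1 + B by lra.
have -> : (1 + N * ic) * M = M + ic * (N * M) by ring.
have -> : (1 + ic) * (2 + A + B) = (2 + A + B) + ic * (2 + A + B) by ring.
rewrite -/ic -/A -/B in h2 A0 B0 *; lra.
Qed.
Lemma exp_bound (R : realType) d (Omega : measurableType d) (P : probability Omega R)
  (Z1 Z2 : Omega -> nat) (c e C : R) :
  (forall k, measurable [set w | Z1 w = k]) ->
  (forall k, measurable [set w | Z2 w = k]) ->
  0 < c -> 1 < e ->
  (\int[P]_w (((Z1 w)%:R `^ (1 + e))%:E) < C%:E)%E ->
  (\int[P]_w (((Z2 w)%:R `^ (1 + e))%:E) < C%:E)%E ->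
  (\int[P]_w ((1 + (Z1 w)%:R / c) * (Z2 w)%:R)%:E <=
     ((1 + c^-1) * (2 + C + C))%:E)%E.
Proof.
move=> m1 m2 c0 e1 M1 M2.
have ic0 : 0 <= 1 + c^-1 by rewrite addr_ge0 // invr_ge0 ltW.
have mA : measurable_fun setT (fun w => ((Z1 w)%:R `^ (1 + e))%:E).
  exact: (@meas_natfun _ _ _ _ Z1 (fun n => ((n%:R : R) `^ (1 + e))%:E) m1).
have mB : measurable_fun setT (fun w => ((Z2 w)%:R `^ (1 + e))%:E).
  exact: (@meas_natfun _ _ _ _ Z2 (fun n => ((n%:R : R) `^ (1 + e))%:E) m2).
apply: (@le_trans _ _ (\int[P]_w ((1 + c^-1)%:E *
   (2%:E + ((Z1 w)%:R `^ (1 + e))%:E + ((Z2 w)%:R `^ (1 + e))%:E)))%E).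
  apply: ge0_le_integral => //.
  - by move=> w _; rewrite lee_fin mulr_ge0 // addr_ge0 // divr_ge0 // ltW.
  - exact: (@meas_natfun2 _ _ _ _ Z1 Z2 (fun n m => (((1 + (n%:R : R) / c) * m%:R)%:E)) m1 m2).
  - exact: (@meas_natfun2 _ _ _ _ Z1 Z2 (fun n m => ((1 + c^-1)%:E *
        (2%:E + (((n%:R : R) `^ (1 + e))%:E) + ((m%:R : R) `^ (1 + e))%:E))%E) m1 m2).
  - move=> w _; rewrite -!EFinD -EFinM lee_fin; exact: ptw_bound.
have f0 : forall w, setT w -> (0 <= 2%:E + ((Z1 w)%:R `^ (1 + e))%:E + ((Z2 w)%:R `^ (1 + e))%:E :> \bar R)%E.
  by move=> w _; rewrite -!EFinD lee_fin; apply: addr_ge0; [apply: addr_ge0|]; rewrite ?powR_ge0.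
have mf : measurable_fun setT (fun w => 2%:E + ((Z1 w)%:R `^ (1 + e))%:E + ((Z2 w)%:R `^ (1 + e))%:E :> \bar R)%E.
  by apply: emeasurable_funD => //; apply: emeasurable_funD.
rewrite ge0_integralZl_EFin //.
rewrite EFinM lee_wpmul2l ?lee_fin //.
have g0 : forall w, setT w -> (0 <= 2%:E + ((Z1 w)%:R `^ (1 + e))%:E :> \bar R)%E.
  by move=> w _; rewrite -EFinD lee_fin addr_ge0 ?powR_ge0.
have mg : measurable_fun setT (fun w => 2%:E + ((Z1 w)%:R `^ (1 + e))%:E :> \bar R)%E.
  by apply: emeasurable_funD.
rewrite ge0_integralD //.
rewrite ge0_integralD //.
rewrite integral_cst // [X in (_ * X + _)%E](_ : _ = 1%E); last exact: probability_setT.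
rewrite mule1 !EFinD.
by apply: leeD; [apply: leeD => //|]; exact: ltW.
Qed.

Theorem lemma1
  (R : realType) (d0 : measure_display) (Omega : measurableType d0)
  (P : probability Omega R)
  (Y : int -> Omega -> nat)
  (d : nat) (Th : set 'rV[R]_d)
  (f : 'rV[R]_d -> (nat -> nat) -> R)
  (p : R -> nat -> R)
  (ths : 'rV[R]_d) (ms : {set 'I_d}) (M : {set {set 'I_d}})
  (al0 al1 al2 : nat -> R) (kappa : nat -> R) (C eps : R)
  (* Y is an N_0-valued process (each Y_t is a random variable) *)
  (HYmeas : forall (t : int) (k : nat), measurable [set w | Y t w = k])
  (* p(. ; lambda) is a discrete distribution on N_0 *)
  (Hp : forall l : R, 0 < l ->
        (forall k, 0 <= p l k) /\ (\sum_(0 <= k <oo) (p l k)%:E = 1)%E)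
  (* Theta is a compact subset of R^d *)
  (HTh : compact Th)
  (* each f_theta is non-negative and measurable on N_0^N *)
  (Hf : forall th, Th th ->
        (forall y, 0 <= f th y) /\
        (forall B : set R, measurable B -> cyl_measurable_N (f th @^-1` B)))
  (* the models: m* in M, theta* in Theta(m* ) *)
  (HM : ms \in M) (Hths : Theta_m Th ms ths)
  (* Y_t | F_{t-1} ~ p(. ; lambda_t(theta* )) *)
  (Hcond : forall (t : int) (k : nat) (A : set Omega), Fpast Y t A ->
     P (A `&` [set w | Y t w = k]) =
     (\int[P]_(w in A) (p (lam f Y ths t w) k)%:E)%E)
  (* lambda_t(theta* ) = E(Y_t | F_{t-1}) *)
  (Hce : forall (t : int) (A : set Omega), Fpast Y t A ->
     (\int[P]_(w in A) ((Y t w)%:R)%:E)%E =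
     (\int[P]_(w in A) (lam f Y ths t w)%:E)%E)
  (* strict stationarity and ergodicity *)
  (Hstat : strictly_stationary P Y)
  (Herg : ergodic P Y)
  (* moment condition *)
  (HC : 0 < C) (Heps : 1 < eps)
  (Hmom : forall t : int,
     (\int[P]_w (((Y t w)%:R `^ (1 + eps))%:E) < C%:E)%E)
  (* (A_i(Theta)), i = 0, 1, 2 *)
  (HA0T : A0_Theta Th f al0) (HA1T : A1_Theta Th f al1)
  (HA2T : A2_Theta Th f al2)
  (* (A0) *)
  (HA0 : (forall (th th' : 'rV[R]_d) (t : int), Th th -> Th th' ->
            {ae P, forall w, lam f Y th t w = lam f Y th' t w} -> th = th') /\
         (exists c : R, 0 < c /\ forall th y, Th th -> c <= f th y))
  (* (A1) *)
  (HA1 : interior_model Th ms ths)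
  (* (A2) *)
  (HA2 : forall y, C2_on Th (fun th => f th y))
  (* (A3) *)
  (HA3 : {ae P, forall w,
     (a_t f Y Th ^~ w @ \oo --> 0%E) /\
     ((fun t : nat => ((Y t%:Z w)%:R)%:E * a_t f Y Th t w)%E @ \oo --> 0%E)})
  (* (A4) *)
  (HA4 : forall (t : int) (i j : 'I_d),
     (\int[P]_w (`|(lam f Y ths t w)^-1
                    * pd i (fun u => lam f Y u t w) ths
                    * pd j (fun u => lam f Y u t w) ths|)%:E < +oo)%E /\
     (\int[P]_w `|condvar p (lam f Y ths t w)
                  * ((lam f Y ths t w ^+ 2)^-1
                     * pd i (fun u => lam f Y u t w) ths
                     * pd j (fun u => lam f Y u t w) ths)%:E| < +oo)%E)
  (* (A5) *)
  (HA5 : forall (t : int) (c : 'rV[R]_d),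
     {ae P, forall w, \sum_(i < d) c 0 i * pd i (fun u => lam f Y u t w) ths = 0} ->
     c = 0)
  (* (A6) *)
  (HA6 : exists V : set 'rV[R]_d, nbhs ths V /\
     forall (t : int) (i j : 'I_d),
     (\int[P]_w ereal_sup
         [set (`|pd i (pd j (fun u => ell f Y u t w)) th|)%:E | th in V]
       < +oo)%E)
  (* (A7) *)
  (HA7 : exists h : R, 1 / 2 < h /\
     bigO_pow (b_t P f Y Th) h /\
     {ae P, forall w,
        bigO_pow (fun t : nat => b_t P f Y Th t * ((Y t%:Z w)%:R)%:E)%E h} /\
     {ae P, forall w,
        bigO_pow (fun t : nat =>
          a_t f Y Th t w * d_t P f Y Th t * ((Y t%:Z w)%:R)%:E)%E h})
  (* the sequence kappa_n *)
  (Hkinc : forall n m : nat, (0 < n)%N -> (n < m)%N -> kappa n < kappa m)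
  (Hkpos : forall n : nat, (0 < n)%N -> 0 < kappa n < n%:R)
  (Hkinf : kappa @ \oo --> +oo)
  (Hko : (fun n : nat => kappa n / n%:R) @ \oo --> 0)
  (Hksum : forall al, al = al0 \/ al = al1 \/ al = al2 ->
     (\sum_(0 <= l <oo)
        ((kappa l.+1)^-1)%:E * (\sum_(l <= k <oo) (al k)%:E) < +oo)%E) :
  {ae P, forall w,
    (fun n : nat => ((kappa n)^-1)%:E *
       ereal_sup [set (`|Lnhat f Y th n w - Ln f Y th n w|)%:E | th in Th])%E
    @ \oo --> 0%E}.
Proof.
have [c [c0 cf]] := HA0.2.
have [_ [al00 [_ Hal0]]] := HA0T.
pose yl (t : nat) (w : Omega) := fun k : nat => Y (t%:Z - (k.+1)%:Z)%R w.
pose yh (t : nat) (w : Omega) := fun k : nat =>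
  if (k.+1 < t)%N then Y (t%:Z - (k.+1)%:Z)%R w else 0%N.
pose trm (t k : nat) (w : Omega) :=
  al0 k * `|((yh t w k)%:R : R) - (yl t w k)%:R|.
pose g (t : nat) (w : Omega) := (\sum_(0 <= k <oo) (trm t k w)%:E)%E.
pose x (t : nat) (w : Omega) := ((1 + (Y t%:Z w)%:R / c)%:E * g t w)%E.
pose S (w : Omega) := (\sum_(0 <= l <oo) ((kappa l.+1)^-1)%:E * x l.+1 w)%E.
have trm0 : forall t k w, 0 <= trm t k w by move=> t k w; rewrite mulr_ge0.
have g0 : forall t w, (0 <= g t w)%E.
  by move=> t w; apply: nneseries_ge0 => k _ _; rewrite lee_fin.
have x0 : forall t w, (0 <= x t w)%E.
  move=> t w; apply: mule_ge0 => //; rewrite lee_fin addr_ge0 // divr_ge0 //.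
  exact: ltW.
have ptw : forall th, Th th -> forall (t : nat) w,
   ((`|((Y t%:Z w)%:R * ln (lamhat f Y th t w) - lamhat f Y th t w)
      - ell f Y th t%:Z w|)%:E <= x t w)%E.
  move=> th Thth t w; rewrite /ell.
  set a := lamhat f Y th t w; set b := lam f Y th t%:Z w.
  set Yr := ((Y t%:Z w)%:R : R).
  have ca : c <= a by exact: cf.
  have cb : c <= b by exact: cf.
  have hl := @ln_lip R c a b c0 ca cb.
  have Y0 : 0 <= Yr by [].
  have r : `|Yr * ln a - a - (Yr * ln b - b)| <= (1 + Yr / c) * `|a - b|.
    rewrite (_ : Yr * ln a - a - (Yr * ln b - b) = Yr * (ln a - ln b) - (a - b));
      last by ring.
    apply: le_trans (ler_normB _ _) _; rewrite normrM (ger0_norm Y0).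
    have := ler_wpM2l Y0 hl.
    rewrite (_ : (1 + Yr / c) * `|a - b| = `|a - b| + Yr * (`|a - b| / c)); last by ring.
    lra.
  apply: (@le_trans _ _ (((1 + Yr / c) * `|a - b|)%:E)); first by rewrite lee_fin.
  rewrite EFinM; apply: lee_wpmul2l.
    by rewrite lee_fin addr_ge0 // divr_ge0 // ltW.
  exact: (Hal0 (yh t w) (yl t w) th Thth).
have Thths : Th ths by case: Hths.
have sup : forall n w,
  (0 <= ereal_sup [set (`|Lnhat f Y th n w - Ln f Y th n w|)%:E | th in Th])%E /\
  (ereal_sup [set (`|Lnhat f Y th n w - Ln f Y th n w|)%:E | th in Th]
     <= \sum_(1 <= t < n.+1) x t w)%E.
  move=> n w; split.
    by apply: le_ereal_sup_tmp; eexists; first by exists ths.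
  apply: ge_ereal_sup => _ [th Thth <-].
  rewrite /Lnhat /Ln -sumrB.
  apply: (@le_trans _ _ (\sum_(1 <= t < n.+1) `|((Y t%:Z w)%:R * ln (lamhat f Y th t w) - lamhat f Y th t w)
      - ell f Y th t%:Z w|)%:E)%E.
    by rewrite lee_fin; exact: ler_norm_sum.
  rewrite -sumEFin; apply: lee_sum => t _; exact: ptw.
have mtrm : forall t k, measurable_fun setT (fun w => (trm t k w)%:E).
  move=> t k.
  exact: (@meas_natfun _ _ _ _ (Y (t%:Z - (k.+1)%:Z)%R)
    (fun j => (al0 k * Num.norm ((((if (k.+1 < t)%N then j else 0%N)%:R) : R) - (j%:R : R)))%:E)
    (HYmeas _)).
have mg : forall t, measurable_fun setT (g t).
  move=> t; apply: (@ge0_emeasurable_sum _ _ _ setT (fun k w => (trm t k w)%:E) predT).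
    by move=> k w _ _; rewrite lee_fin.
  by move=> k _; exact: mtrm.
have mx : forall t, measurable_fun setT (x t).
  move=> t; apply: emeasurable_funM => //.
  exact: (@meas_natfun _ _ _ _ (Y t%:Z) (fun j => (1 + (j%:R : R) / c)%:E) (HYmeas _)).
have mS : measurable_fun setT S.
  apply: (@ge0_emeasurable_sum _ _ _ setT (fun l w => ((kappa l.+1)^-1)%:E * x l.+1 w)%E predT).
    move=> l w _ _; apply: mule_ge0 => //; rewrite lee_fin invr_ge0.
    by have /andP[/ltW] := Hkpos l.+1 isT.
  by move=> l _; apply: emeasurable_funM => //.
pose K := (1 + c^-1) * (2 + C + C).
have K0 : 0 <= K.
  by rewrite /K mulr_ge0 // ?addr_ge0 ?invr_ge0 ?ltW.
have mtt : forall t k, measurable_fun setT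
    (fun w => ((1 + (Y t%:Z w)%:R / c) * trm t k w)%:E).
  move=> t k.
  exact: (@meas_natfun2 _ _ _ _ (Y t%:Z) (Y (t%:Z - (k.+1)%:Z)%R)
    (fun i j => ((1 + (i%:R : R) / c) *
      (al0 k * Num.norm ((((if (k.+1 < t)%N then j else 0%N)%:R) : R) - (j%:R : R))))%:E)
    (HYmeas _) (HYmeas _)).
have tt0 : forall t k w, (0 <= ((1 + (Y t%:Z w)%:R / c) * trm t k w)%:E)%E.
  by move=> t k w; rewrite lee_fin mulr_ge0 // addr_ge0 // divr_ge0 // ltW.
have xe : forall t w,
    x t w = (\sum_(0 <= k <oo) ((1 + (Y t%:Z w)%:R / c) * trm t k w)%:E)%E.
  move=> t w; rewrite /x /g -nneseriesZl; last by move=> k _; rewrite lee_fin.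
  by apply: eq_eseriesr => k _; rewrite EFinM.
have Ex : forall l, (\int[P]_w x l.+1 w <= K%:E * \sum_(l <= k <oo) (al0 k)%:E)%E.
  move=> l.
  under eq_integral do rewrite xe.
  rewrite integral_nneseries //.
  rewrite [X in (X <= _)%E](nneseries_split _ l); last by move=> k _; apply: integral_ge0 => w _.
  rewrite add0n big_nat_cond big1 ?add0e; last first.
    move=> k /andP[/andP[_ kl] _]; apply: integral0_eq => w _.
    by rewrite /trm /yh /yl ltnS kl subrr normr0 !mulr0.
  rewrite -nneseriesZl; last by move=> k _; rewrite lee_fin.
  apply: lee_nneseries; first by move=> k _ _; apply: integral_ge0 => w _.
  move=> k _.
  set s := (l.+1%:Z - (k.+1)%:Z)%R.
  have mYY : measurable_fun setT
      (fun w => ((1 + (Y l.+1%:Z w)%:R / c) * (Y s w)%:R)%:E).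
    exact: (@meas_natfun2 _ _ _ _ (Y l.+1%:Z) (Y s)
      (fun i j => ((1 + (i%:R : R) / c) * (j%:R : R))%:E) (HYmeas _) (HYmeas _)).
  have YY0 : forall w, setT w -> (0 <= ((1 + (Y l.+1%:Z w)%:R / c) * (Y s w)%:R)%:E)%E.
    by move=> w _; rewrite lee_fin mulr_ge0 // addr_ge0 // divr_ge0 // ltW.
  apply: (@le_trans _ _ (\int[P]_w ((al0 k)%:E *
      ((1 + (Y l.+1%:Z w)%:R / c) * (Y s w)%:R)%:E))%E).
    apply: ge0_le_integral => //.
      by apply: emeasurable_funM => //.
    move=> w _; rewrite -EFinM lee_fin /trm.
    have hd : `|((yh l.+1 w k)%:R : R) - (yl l.+1 w k)%:R| <= (Y s w)%:R.
      rewrite /yh /yl; case: ifP => _; first by rewrite subrr normr0.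
      by rewrite sub0r normrN ger0_norm.
    rewrite mulrCA; apply: ler_wpM2l => //; apply: ler_wpM2l => //.
    by rewrite addr_ge0 // divr_ge0 // ltW.
  rewrite ge0_integralZl_EFin // muleC; apply: lee_wpmul2r; first by rewrite lee_fin.
  exact: (@exp_bound R _ Omega P (Y l.+1%:Z) (Y s) c eps C (HYmeas _) (HYmeas _)
    c0 Heps (Hmom _) (Hmom _)).
have kp : forall l, 0 < kappa l.+1 by move=> l; have /andP[] := Hkpos l.+1 isT.
have S0 : forall w, (0 <= S w)%E.
  move=> w; apply: nneseries_ge0 => l _ _; apply: mule_ge0 => //.
  by rewrite lee_fin invr_ge0 ltW.
have Hk0 := Hksum al0 (or_introl erefl).
set T := (\sum_(0 <= l <oo) ((kappa l.+1)^-1)%:E * (\sum_(l <= k <oo) (al0 k)%:E))%E in Hk0.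
have T0 : (0 <= T)%E.
  apply: nneseries_ge0 => l _ _; apply: mule_ge0; first by rewrite lee_fin invr_ge0 ltW.
  by apply: nneseries_ge0 => k _ _; rewrite lee_fin.
have ES : (\int[P]_w S w < +oo)%E.
  rewrite integral_nneseries //; first last.
  - by move=> l w _; apply: mule_ge0 => //; rewrite lee_fin invr_ge0 ltW.
  - by move=> l; apply: emeasurable_funM.
  apply: (@le_lt_trans _ _ (K%:E * T)%E); last first.
    have Tfin : T \is a fin_num by rewrite ge0_fin_numE.
    by rewrite -(fineK Tfin) -EFinM ltry.
  rewrite /T -nneseriesZl; last first.
    move=> l _; apply: mule_ge0; first by rewrite lee_fin invr_ge0 ltW.
    by apply: nneseries_ge0 => k _ _; rewrite lee_fin.
  apply: lee_nneseries.
    move=> l _ _; apply: integral_ge0 => w _; apply: mule_ge0 => //.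
    by rewrite lee_fin invr_ge0 ltW.
  move=> l _; rewrite ge0_integralZl_EFin //; last by rewrite invr_ge0 ltW.
  rewrite muleCA; apply: lee_wpmul2l; first by rewrite lee_fin invr_ge0 ltW.
  exact: Ex.
have Sint : P.-integrable setT S.
  apply/integrableP; split => //.
  under eq_integral do rewrite gee0_abs //.
  exact: ES.
have := integrable_ae measurableT Sint.
apply: filterS => w /(_ I) Sfin.
have Slt : (S w < +oo)%E by rewrite -ge0_fin_numE.
have kr := @kron R kappa (fun t => x t w).
have kc : (fun n => ((kappa n)^-1)%:E * \sum_(1 <= t < n.+1) x t w)%E @ \oo --> 0%E.
  apply: kr => //.
  - by move=> n n0; have /andP[] := Hkpos n n0.
  - move=> n m n0; rewrite leq_eqVlt => /orP[/eqP -> //|nm].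
    exact/ltW/Hkinc.
apply: (squeeze_cvge (f := fun=> 0%E)) kc; last exact: cvg_cst.
near=> n.
have n0 : (0 < n)%N by near: n; exact: nbhs_infty_gt.
have kn0 : 0 < kappa n by have /andP[] := Hkpos n n0.
have [s0 sle] := sup n w.
apply/andP; split.
  by apply: mule_ge0 => //; rewrite lee_fin invr_ge0 ltW.
by apply: lee_wpmul2l => //; rewrite lee_fin invr_ge0 ltW.
Unshelve. all: end_near.
Qed.
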